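(* Let $m\ge2$ be an integer, $U_c=m^{-1/(m-1)}$, $g_c=U_c^m$, and $H_m=\sum_{k=1}^m\frac1k$. For $g>0$ consider the potential $$V(U)=\frac1g\sum_{k=1}^m\frac1k\,U_c^{m-k}\Big[U_c^k-(U_c-U)^k\Big].$$ Then $V(0)=0$, the coefficient of $U$ in $V$ is $1/g$, and $U V'(U)=\frac1g\big[U_c^m-(U_c-U)^m\big]$, so the self-consistency equation $UV'(U)=1$ reads $g=g_c-(U_c-U)^m$. Taking for $0<g<g_c$ the solution $U(g)=U_c-(g_c-g)^{1/m}$ (positive real root), the free energy $f_0(g)=V(U(g))-\ln U(g)$ satisfies, as $g\to g_c^-$, $$f_0(g)=f_0(g_c)+H_m\,\frac{g_c-g}{g_c}-\frac{m}{m+1}\Big(\frac{g_c-g}{g_c}\Big)^{1+\frac1m}+O\big((g_c-g)^{1+\frac2m}\big),$$ where $f_0(g_c)=H_m-\ln U_c$. Hence the entropy exponent (defined by $f_0^{\rm sing}\sim(g_c-g)^{2-\gamma}$) is $\gamma_m=1-\frac1m$.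
   Context: In the tensor model, the leading-order potential is $V(x)=\sum_{n\ge1}t_nx^n$ with $t_n$ the sum of couplings of melonic bubbles with $2n$ vertices, here parametrized as $t_1=1/g$, $t_n=\alpha_n/g$; the leading order two-point function $U$ solves $UV'(U)=1$ and the leading order free energy is $f_0=V(U)-\ln U$. A multicritical point of order $m$ is one where $\partial^j g/\partial U^j=0$ for $1\le j\le m-1$ and $\partial^m g/\partial U^m\neq0$. *)

(* Defs.v *)
From Stdlib Require Import Reals.
Open Scope R_scope.

Fixpoint sum1 (f : nat -> R) (n : nat) : R :=
  match n with
  | O => 0
  | S p => sum1 f p + f (S p)
  end.

Definition Uc (m : nat) : R := Rpower (INR m) (- / (INR m - 1)).
Definition gc (m : nat) : R := Uc m ^ m.
Definition Hm (m : nat) : R := sum1 (fun k => / INR k) m.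

Definition V (m : nat) (g U : R) : R :=
  / g * sum1 (fun k => / INR k * Uc m ^ (m - k) * (Uc m ^ k - (Uc m - U) ^ k)) m.

(* nonnegative real m-th root x^{1/m} for x >= 0 (with 0^{1/m} = 0;
   Stdlib's Rpower 0 y is 1, hence the case split) *)
Definition mroot (m : nat) (x : R) : R :=
  if Rle_dec x 0 then 0 else Rpower x (/ INR m).

Definition Ug (m : nat) (g : R) : R := Uc m - mroot m (gc m - g).

Definition f0 (m : nat) (g : R) : R := V m g (Ug m g) - ln (Ug m g).

(* Main.v *)
Require Import Defs.
From Stdlib Require Import Reals Lra Lia.
Open Scope R_scope.

Lemma sum1_ext f g n : (forall k, (1 <= k <= n)%nat -> f k = g k) -> sum1 f n = sum1 g n.
Proof. induction n; intros H; cbn [sum1]; auto.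
rewrite IHn by (intros; apply H; lia). rewrite H by lia. reflexivity. Qed.

Lemma sum1_scal c f n : sum1 (fun k => c * f k) n = c * sum1 f n.
Proof. induction n; cbn [sum1]; [ring | rewrite IHn; ring]. Qed.

Lemma sum1_plus f g n : sum1 (fun k => f k + g k) n = sum1 f n + sum1 g n.
Proof. induction n; cbn [sum1]; [ring | rewrite IHn; ring]. Qed.

Lemma sum1_minus f g n : sum1 (fun k => f k - g k) n = sum1 f n - sum1 g n.
Proof. induction n; cbn [sum1]; [ring | rewrite IHn; ring]. Qed.

Lemma sum1_const c n : sum1 (fun _ => c) n = INR n * c.
Proof. induction n; cbn [sum1]; [simpl; ring | rewrite IHn, S_INR; ring]. Qed.

Lemma sum1_nonneg f n : (forall k, (1 <= k <= n)%nat -> 0 <= f k) -> 0 <= sum1 f n.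
Proof. induction n; intros H; cbn [sum1]; [lra|].
assert (0 <= sum1 f n) by (apply IHn; intros; apply H; lia).
assert (0 <= f (S n)) by (apply H; lia). lra. Qed.

Lemma sum1_deriv (F : nat -> R -> R) dF n x :
  (forall k, derivable_pt_lim (F k) x (dF k)) ->
  derivable_pt_lim (fun y => sum1 (fun k => F k y) n) x (sum1 dF n).
Proof. intros H; induction n; cbn [sum1].
- apply derivable_pt_lim_const.
- change (fun y => sum1 (fun k => F k y) n + F (S n) y) with
   (plus_fct (fun y => sum1 (fun k => F k y) n) (F (S n))).
  apply derivable_pt_lim_plus; auto. Qed.

Lemma telesc a b m n : (n <= m)%nat ->
  sum1 (fun k => a^(m-k) * b^(pred k) * (a - b)) n = a^m - a^(m-n)*b^n.
Proof. induction n; intros Hn; cbn [sum1].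
- rewrite Nat.sub_0_r; simpl; ring.
- rewrite IHn by lia. replace (m - n)%nat with (S (m - S n)) by lia.
  cbn [pred pow]. ring. Qed.

Lemma geom y n : (1 - y) * sum1 (fun k => y ^ pred k) n = 1 - y ^ n.
Proof. induction n; cbn [sum1]. simpl; ring. rewrite Rmult_plus_distr_l, IHn. cbn [pred pow]. ring. Qed.

Lemma INR_m_gt1 m : (2 <= m)%nat -> 1 < INR m.
Proof. intros; replace 1 with (INR 1) by reflexivity; apply lt_INR; lia. Qed.

Lemma Uc_pos m : 0 < Uc m.
Proof. unfold Uc, Rpower; apply exp_pos. Qed.

Lemma gc_pos m : 0 < gc m.
Proof. unfold gc; apply pow_lt, Uc_pos. Qed.

Lemma Uc_pow_pred m : (2 <= m)%nat -> Uc m ^ (m - 1) = / INR m.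
Proof. intros Hm. pose proof (INR_m_gt1 m Hm).
rewrite <- Rpower_pow by apply Uc_pos. unfold Uc. rewrite Rpower_mult.
rewrite minus_INR by lia. simpl INR.
replace (- / (INR m - 1) * (INR m - 1)) with (- (1)) by (field; lra).
rewrite Rpower_Ropp, Rpower_1 by lra. reflexivity. Qed.

Lemma gc_root m : (2 <= m)%nat -> Rpower (gc m) (/ INR m) = Uc m.
Proof. intros Hm. pose proof (INR_m_gt1 m Hm). unfold gc.
rewrite <- Rpower_pow by apply Uc_pos. rewrite Rpower_mult.
rewrite Rinv_r by lra. apply Rpower_1, Uc_pos. Qed.

Lemma root_pow m x : (2 <= m)%nat -> 0 < x -> Rpower x (/ INR m) ^ m = x.
Proof. intros Hm Hx. pose proof (INR_m_gt1 m Hm).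
rewrite <- Rpower_pow by (unfold Rpower; apply exp_pos). rewrite Rpower_mult.
rewrite Rinv_l by lra. apply Rpower_1, Hx. Qed.

Lemma deq f x l l' : derivable_pt_lim f x l -> l = l' -> derivable_pt_lim f x l'.
Proof. intros H ->; exact H. Qed.

Lemma dscal a f x l : derivable_pt_lim f x l -> derivable_pt_lim (fun y => a * f y) x (a * l).
Proof. intros H. apply (derivable_pt_lim_scal f a x l H). Qed.

Lemma dcminus c f x l : derivable_pt_lim f x l -> derivable_pt_lim (fun y => c - f y) x (- l).
Proof. intros H. eapply deq.
apply (derivable_pt_lim_minus (fun _ => c) f x 0 l). apply derivable_pt_lim_const. exact H. ring. Qed.

Lemma V_deriv m g U : derivable_pt_lim (V m g) U
  (/ g * sum1 (fun k => Uc m ^ (m - k) * (Uc m - U) ^ pred k) m).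
Proof. unfold V. apply dscal.
eapply deq. apply sum1_deriv. intros k.
apply dscal. apply dcminus.
apply (derivable_pt_lim_comp (fun y => Uc m - y) (fun y => y ^ k)).
 apply dcminus. apply derivable_pt_lim_id.
apply derivable_pt_lim_pow.
apply sum1_ext. intros k Hk.
assert (INR k <> 0) by (apply not_0_INR; lia). simpl. field. auto. Qed.

Lemma V_deriv_mul m g U : U * (/ g * sum1 (fun k => Uc m ^ (m - k) * (Uc m - U) ^ pred k) m)
  = / g * (Uc m ^ m - (Uc m - U) ^ m).
Proof. replace (Uc m ^ m - (Uc m - U) ^ m) with (Uc m ^ m - Uc m ^ (m - m) * (Uc m - U) ^ m)
  by (rewrite Nat.sub_diag; ring).
rewrite <- telesc by lia.
transitivity (/ g * (U * sum1 (fun k => Uc m ^ (m - k) * (Uc m - U) ^ pred k) m)); [ring|].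
f_equal. rewrite <- sum1_scal. apply sum1_ext; intros; ring. Qed.

Definition phi m y := - ln (1 - y) - sum1 (fun k => y ^ k / INR k) (S m).

Lemma phi_deriv m c : c < 1 ->
  derivable_pt_lim (phi m) c (c ^ (S m) / (1 - c)).
Proof. intros Hc. unfold phi. eapply deq.
apply (derivable_pt_lim_minus (fun y => - ln (1 - y))).
- apply (derivable_pt_lim_opp (fun y => ln (1 - y))).
  apply (derivable_pt_lim_comp (fun y => 1 - y) ln).
  apply dcminus, derivable_pt_lim_id. apply derivable_pt_lim_ln. lra.
- apply sum1_deriv. intros k. unfold Rdiv.
  apply (derivable_pt_lim_mult (fun y => y ^ k) (fun _ => / INR k)).
  apply derivable_pt_lim_pow. apply derivable_pt_lim_const.
- rewrite (sum1_ext _ (fun k => c ^ pred k)).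
  2:{ intros k Hk. assert (INR k <> 0) by (apply not_0_INR; lia). field. auto. }
  assert (Hg := geom c (S m)).
  assert (1 - c <> 0) by lra.
  replace (sum1 (fun k => c ^ pred k) (S m)) with ((1 - c ^ S m) / (1 - c))
    by (rewrite <- Hg; field; auto).
  field. auto. Qed.

Lemma phi_0 m : phi m 0 = 0.
Proof. unfold phi. rewrite Rminus_0_r, ln_1.
rewrite (sum1_ext _ (fun _ => 0)). rewrite sum1_const. ring.
intros k Hk. destruct k. lia. simpl. unfold Rdiv. ring. Qed.

Lemma phi_bound m y : 0 <= y <= 1/2 -> Rabs (phi m y) <= 2 * y ^ (S (S m)).
Proof. intros Hy. destruct (Req_dec y 0) as [->|Hy0].
- rewrite phi_0, Rabs_R0. simpl. lra.
- destruct (MVT_cor2 (phi m) (fun c => c ^ (S m) / (1 - c)) 0 y) as [c [Hc1 Hc2]].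
  lra. intros c Hc. apply phi_deriv. lra.
  rewrite phi_0, Rminus_0_r, Rminus_0_r in Hc1. rewrite Hc1.
  assert (0 <= c ^ S m) by (apply pow_le; lra).
  assert (c ^ S m <= y ^ S m) by (apply pow_incr; lra).
  rewrite Rabs_pos_eq.
  2:{ apply Rmult_le_pos; [|lra]. unfold Rdiv. apply Rmult_le_pos; auto.
      left; apply Rinv_0_lt_compat; lra. }
  change (y ^ S (S m)) with (y * y ^ (S m)).
  assert (c ^ S m / (1 - c) <= 2 * y ^ S m).
  { apply (Rmult_le_reg_r (1 - c)). lra. unfold Rdiv. rewrite Rmult_assoc, Rinv_l by lra.
    nra. }
  nra. Qed.

Lemma Sy_bound y n : (1 <= n)%nat -> 0 <= y <= 1 ->
  0 <= sum1 (fun k => y ^ k / INR k) n - y <= INR n * y ^ 2.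
Proof. intros Hn Hy. induction n. lia.
destruct n. cbn [sum1]. simpl. split; [lra|]. nra.
specialize (IHn ltac:(lia)). cbn [sum1] in *.
assert (0 <= y ^ S (S n) / INR (S (S n))).
{ unfold Rdiv. apply Rmult_le_pos. apply pow_le; lra. left; apply Rinv_0_lt_compat, lt_0_INR; lia. }
assert (y ^ S (S n) / INR (S (S n)) <= y ^ 2).
{ assert (1 <= INR (S (S n))) by (replace 1 with (INR 1) by reflexivity; apply le_INR; lia).
  assert (y ^ S (S n) <= y ^ 2).
  { replace (S (S n)) with (2 + n)%nat by lia. rewrite pow_add.
    assert (y ^ n <= 1) by (rewrite <- (pow1 n); apply pow_incr; lra). assert (0 <= y^2) by (apply pow_le; lra). nra. }
  apply (Rmult_le_reg_r (INR (S (S n)))). lra. unfold Rdiv. rewrite Rmult_assoc, Rinv_l by lra.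
  assert (0 <= y^2) by (apply pow_le; lra). nra. }
assert (HH: INR (S (S n)) * y^2 = INR (S n) * y^2 + y^2) by (rewrite (S_INR (S n)); ring). lra. Qed.

Lemma Hm_nonneg m : 0 <= Hm m.
Proof. unfold Hm. apply sum1_nonneg. intros k Hk. left; apply Rinv_0_lt_compat, lt_0_INR; lia. Qed.

Lemma bound_core t y H D P M : 0 < t <= y^2 -> 0 < y <= 1/2 -> t <= 1/2 -> 0 <= H ->
  0 <= D <= M * y^2 -> Rabs P <= 2 * t * y^2 ->
  Rabs (t * (H * t - D - t * y) / (1 - t) + P) <= (2 * H + 2 * M + 4) * t * y^2.
Proof. intros Ht Hy Ht2 HH HD HP.
set (Q := H * t - D - t * y).
assert (HQ : Rabs Q <= H * y^2 + M * y^2 + y^2).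
{ unfold Q. apply Rabs_le. split; nra. }
assert (Hr : t * Q / (1 - t) = (t / (1 - t)) * Q) by (field; lra).
assert (0 < t / (1 - t) <= 2 * t).
{ split. apply Rdiv_lt_0_compat; lra. apply (Rmult_le_reg_r (1 - t)). lra.
  unfold Rdiv. rewrite Rmult_assoc, Rinv_l by lra. nra. }
eapply Rle_trans. apply Rabs_triang. rewrite Hr, Rabs_mult, (Rabs_pos_eq (t / (1 - t))) by lra.
assert (0 <= Rabs Q) by apply Rabs_pos.
assert (t / (1 - t) * Rabs Q <= 2 * t * (H * y^2 + M * y^2 + y^2)).
{ apply Rmult_le_compat; lra. }
nra. Qed.

Lemma Ug_gc m : Ug m (gc m) = Uc m.
Proof. unfold Ug, mroot. rewrite Rminus_diag. destruct (Rle_dec 0 0); [ring|lra]. Qed.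

Lemma pow_split (x : R) m k : (k <= m)%nat -> x ^ (m - k) * x ^ k = x ^ m.
Proof. intros. rewrite <- pow_add. f_equal. lia. Qed.

Lemma V_at m g y : (2 <= m)%nat -> 0 < g ->
  V m g (Uc m * (1 - y)) = / g * gc m * (Hm m - sum1 (fun k => y ^ k / INR k) m).
Proof. intros Hm0 Hg. unfold V, Hm, gc.
rewrite (sum1_ext _ (fun k => Uc m ^ m * (/ INR k - y ^ k / INR k))).
rewrite sum1_scal, sum1_minus. ring.
intros k Hk. replace (Uc m - Uc m * (1 - y)) with (Uc m * y) by ring.
rewrite Rpow_mult_distr. rewrite <- (pow_split (Uc m) m k) by lia. unfold Rdiv. ring. Qed.

Lemma f0_gc m : (2 <= m)%nat -> f0 m (gc m) = Hm m - ln (Uc m).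
Proof. intros Hm0. unfold f0. rewrite Ug_gc.
replace (Uc m) with (Uc m * (1 - 0)) at 1 by ring.
rewrite V_at by (auto; apply gc_pos).
rewrite (sum1_ext _ (fun _ => 0)). rewrite sum1_const.
pose proof (gc_pos m). field. lra.
intros k Hk. destruct k. lia. simpl. unfold Rdiv. ring. Qed.

Theorem mainTheorem7 (m : nat) (hm : (2 <= m)%nat) :
  (forall g : R, 0 < g -> V m g 0 = 0 /\ derivable_pt_lim (V m g) 0 (/ g)) /\
  (forall g U : R, 0 < g -> exists d : R,
      derivable_pt_lim (V m g) U d /\
      U * d = / g * (Uc m ^ m - (Uc m - U) ^ m)) /\
  (forall g U d : R, 0 < g -> derivable_pt_lim (V m g) U d ->
      (U * d = 1 <-> g = gc m - (Uc m - U) ^ m)) /\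
  (forall g : R, 0 < g < gc m ->
      g = gc m - (Uc m - Ug m g) ^ m /\ 0 < Ug m g) /\
  f0 m (gc m) = Hm m - ln (Uc m) /\
  (exists C delta : R, 0 < delta /\
     forall g : R, 0 < g -> gc m - delta < g < gc m ->
       Rabs (f0 m g
             - (f0 m (gc m) + Hm m * ((gc m - g) / gc m)
                - INR m / (INR m + 1) * Rpower ((gc m - g) / gc m) (1 + / INR m)))
       <= C * Rpower (gc m - g) (1 + 2 / INR m)).
Proof.
pose proof (INR_m_gt1 m hm) as Hm1. pose proof (Uc_pos m) as HU. pose proof (gc_pos m) as Hgc.
split; [|split; [|split; [|split; [|split]]]].
- intros g Hg. split.
  + unfold V. rewrite (sum1_ext _ (fun _ => 0)). rewrite sum1_const. ring.
    intros k _. rewrite Rminus_0_r. ring.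
  + eapply deq. apply V_deriv.
    rewrite (sum1_ext _ (fun _ => Uc m ^ (m - 1))). rewrite sum1_const, Uc_pow_pred by auto.
    field. lra.
    intros k Hk. rewrite Rminus_0_r, <- pow_add. f_equal. lia.
- intros g U Hg. eexists. split. apply V_deriv. apply V_deriv_mul.
- intros g U d Hg Hd. rewrite (uniqueness_limite _ _ _ _ Hd (V_deriv m g U)).
  rewrite V_deriv_mul. fold (gc m). split; intros H.
  + apply (Rmult_eq_compat_l g) in H. rewrite <- Rmult_assoc, Rinv_r, Rmult_1_l, Rmult_1_r in H by lra. lra.
  + rewrite H at 1. field. lra.
- intros g Hg. unfold Ug, mroot. destruct (Rle_dec (gc m - g) 0). lra.
  replace (Uc m - (Uc m - Rpower (gc m - g) (/ INR m))) with (Rpower (gc m - g) (/ INR m)) by ring.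
  rewrite root_pow by (auto; lra). split. ring.
  rewrite <- (gc_root m hm) at 1. assert (Rpower (gc m - g) (/ INR m) < Rpower (gc m) (/ INR m)).
  apply Rlt_Rpower_l. apply Rinv_0_lt_compat; lra. lra. lra.
- apply f0_gc, hm.
- exists ((2 * Hm m + 2 * INR m + 4) / (gc m * Uc m ^ 2)), (gc m * (/ 2) ^ m).
  assert (Hh : 0 < (/2) ^ m) by (apply pow_lt; lra).
  split. apply Rmult_lt_0_compat; auto.
  intros g Hg Hg2. rewrite f0_gc by auto.
  set (s := gc m - g). set (t := s / gc m).
  assert (Hs : 0 < s) by (unfold s; lra).
  assert (Ht : 0 < t) by (unfold t; apply Rdiv_lt_0_compat; lra).
  assert (Ht2 : t < (/2) ^ m).
  { unfold t. apply (Rmult_lt_reg_r (gc m)); auto. unfold Rdiv. rewrite Rmult_assoc, Rinv_l by lra.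
    unfold s; lra. }
  set (y := Rpower t (/ INR m)).
  assert (Hy0 : 0 < y) by (unfold y, Rpower; apply exp_pos).
  assert (Hym : y ^ m = t) by (apply root_pow; auto).
  assert (Hy2 : y < 1/2).
  { destruct (Rlt_le_dec y (1/2)); auto. assert ((/2)^m <= y^m) by (apply pow_incr; lra). lra. }
  assert (Hty : t <= y ^ 2).
  { rewrite <- Hym. replace m with (2 + (m - 2))%nat by lia. rewrite pow_add.
    assert (y ^ (m-2) <= 1) by (rewrite <- (pow1 (m-2)); apply pow_incr; lra).
    assert (0 < y^2) by (apply pow_lt; lra). nra. }
  assert (Ht12 : t <= 1/2).
  { assert (y^2 <= 1/4) by (simpl; nra). lra. }
  assert (Hsm : mroot m s = Uc m * y).
  { unfold mroot. destruct (Rle_dec s 0). lra.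
    replace s with (gc m * t) by (unfold t; field; lra).
    rewrite <- Rpower_mult_distr by auto. rewrite gc_root by auto. reflexivity. }
  assert (HUg : Ug m g = Uc m * (1 - y)). { unfold Ug. fold s. rewrite Hsm. ring. }
  assert (Hg' : g = gc m * (1 - t)) by (unfold t, s; field; lra).
  assert (Hp1 : Rpower t (1 + / INR m) = t * y) by (rewrite Rpower_plus, Rpower_1; auto).
  assert (Hp2 : Rpower s (1 + 2 / INR m) = s * (Uc m * y) ^ 2).
  { rewrite Rpower_plus, Rpower_1 by auto. f_equal.
    replace (2 / INR m) with (/ INR m * INR 2) by (simpl; field; lra).
    rewrite <- Rpower_mult, Rpower_pow. rewrite <- Hsm. unfold mroot.
    destruct (Rle_dec s 0). lra. reflexivity. unfold Rpower; apply exp_pos. }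
  fold s t. rewrite Hp1, Hp2.
  unfold f0. rewrite HUg. rewrite V_at by auto.
  rewrite ln_mult by (auto; lra).
  set (S0 := sum1 (fun k => y ^ k / INR k) m).
  assert (Hln : ln (1 - y) = - phi m y - S0 - t * y / (INR m + 1)).
  { unfold phi. cbn [sum1]. fold S0. rewrite S_INR. simpl pow. rewrite Hym. lra. }
  rewrite Hln.
  assert (Hid : / g * gc m * (Hm m - S0) - (ln (Uc m) + (- phi m y - S0 - t * y / (INR m + 1)))
     - (Hm m - ln (Uc m) + Hm m * t - INR m / (INR m + 1) * (t * y))
     = t * (Hm m * t - (S0 - y) - t * y) / (1 - t) + phi m y).
  { rewrite Hg'. field. split; [lra|split; lra]. }
  rewrite Hid.
  replace ((2 * Hm m + 2 * INR m + 4) / (gc m * Uc m ^ 2) * (s * (Uc m * y) ^ 2))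
    with ((2 * Hm m + 2 * INR m + 4) * t * y ^ 2)
    by (unfold t; field; split; lra).
  apply bound_core; try lra.
  apply Hm_nonneg.
  apply Sy_bound; lia || lra.
  eapply Rle_trans. apply phi_bound. lra.
  change (y ^ S (S m)) with (y * (y * y ^ m)). rewrite Hym. simpl. lra.
Qed.
Print Assumptions mainTheorem7.
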